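(* Let $V$ be a vector space over a field $\mathbb{F}$, let $u\in\mathrm{End}(V)$ and $a\in\mathbb{F}$. Assume that $V^u$ has a stratification satisfying properties (PA) and (PM). Then there exists an endomorphism $v$ of $V$ such that $v^2=av$ and $u-v$ is elementary.
   Context: For $u\in\mathrm{End}(V)$, $V^u$ is the $\mathbb{F}[t]$-module with underlying space $V$ and $t\cdot x:=u(x)$; $u$ is elementary if $V^u$ is a free $\mathbb{F}[t]$-module. A stratification of a non-zero $\mathbb{F}[t]$-module $M$ is an increasing family $(M_\alpha)_{\alpha\in D}$ of submodules indexed by a well-ordered set $D$ such that for each $\alpha\in D$ the quotient $M_\alpha/\sum_{\beta<\alpha}M_\beta$ is non-zero and monogenous (cyclic), and $M=\sum_{\alpha\in D}M_\alpha$. Its dimension sequence is $n_\alpha:=\dim_{\mathbb{F}}\bigl(M_\alpha/\sum_{\beta<\alpha}M_\beta\bigr)\in\mathbb{N}^*\cup\{+\infty\}$. Property (PA): $n_\alpha\ge 2$ whenever $\alpha$ is the successor (least strictly greater element) of some element of $D$. Property (PM): $D$ has no maximum. *)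

(* Defs.v *)
From HB Require Import structures.
From mathcomp Require Import all_boot all_order all_algebra.
Set Implicit Arguments. Unset Strict Implicit. Unset Printing Implicit Defensive.
Import Order.TTheory GRing.Theory Num.Theory.
Local Open Scope ring_scope.

Section Defs.
Variables (F : fieldType) (V : lmodType F).

(* p(u) x, i.e. the action t.x := u x of F[t] on V^u *)
Definition poly_act (u : V -> V) (p : {poly F}) (x : V) : V :=
  \sum_(i < size p) p`_i *: iter i u x.

(* V^u is a free F[t]-module: there is a basis (e_i)_{i in I} *)
Definition elementary (u : V -> V) : Prop :=
  exists (I : Type) (e : I -> V),
    (forall x : V, exists n (f : 'I_n -> I) (p : 'I_n -> {poly F}),
        x = \sum_(k < n) poly_act u (p k) (e (f k))) /\
    (forall n (f : 'I_n -> I) (p : 'I_n -> {poly F}), injective f ->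
        \sum_(k < n) poly_act u (p k) (e (f k)) = 0 -> forall k, p k = 0).

Definition submodule (u : V -> V) (N : V -> Prop) : Prop :=
  [/\ N 0, (forall x y, N x -> N y -> N (x + y)),
      (forall (c : F) x, N x -> N (c *: x)) & (forall x, N x -> N (u x))].

Definition well_order (D : Type) (lt : D -> D -> Prop) : Prop :=
  [/\ (forall a, ~ lt a a), (forall a b c, lt a b -> lt b c -> lt a c),
      (forall a b, lt a b \/ a = b \/ lt b a) & well_founded lt].

Definition sum_sub (D : Type) (M : D -> V -> Prop) (P : D -> Prop) (y : V) : Prop :=
  exists n (f : 'I_n -> D) (z : 'I_n -> V),
    (forall k, P (f k)) /\ (forall k, M (f k) (z k)) /\ y = \sum_(k < n) z k.

Definition prev_sum (D : Type) (lt : D -> D -> Prop) (M : D -> V -> Prop) (a : D) :=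
  sum_sub M (fun b => lt b a).

Definition stratification (u : V -> V) (D : Type) (lt : D -> D -> Prop)
    (M : D -> V -> Prop) : Prop :=
  (exists x : V, x != 0) /\
  well_order lt /\
  (forall a, submodule u (M a)) /\
  (forall a b x, lt a b -> M a x -> M b x) /\
  (forall a, exists2 y, M a y & ~ prev_sum lt M a y) /\
  (forall a, exists2 x, M a x &
      forall y, M a y -> exists p : {poly F}, prev_sum lt M a (y - poly_act u p x)) /\
  (forall x : V, sum_sub M (fun _ => True) x).

(* dim (M_a / M_{<a}) >= 2 *)
Definition quot_dim_ge2 (D : Type) (lt : D -> D -> Prop) (M : D -> V -> Prop) (a : D) :=
  exists y1 y2, M a y1 /\ M a y2 /\
    forall c1 c2 : F, prev_sum lt M a (c1 *: y1 + c2 *: y2) -> c1 = 0 /\ c2 = 0.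

Definition is_succ (D : Type) (lt : D -> D -> Prop) (a b : D) :=
  lt a b /\ forall c, lt a c -> b = c \/ lt b c.

Definition PA (D : Type) (lt : D -> D -> Prop) (M : D -> V -> Prop) :=
  forall a b, is_succ lt a b -> quot_dim_ge2 lt M b.

Definition PM (D : Type) (lt : D -> D -> Prop) := forall a : D, exists b, lt a b.

End Defs.

(* Main.v *)
Require Import Defs.
From HB Require Import structures.
From mathcomp Require Import all_boot all_order all_algebra all_fingroup.
From Stdlib Require Import Classical ClassicalEpsilon ProofIrrelevance.
Set Implicit Arguments. Unset Strict Implicit. Unset Printing Implicit Defensive.
Import GRing.Theory.
Local Open Scope ring_scope.

Section FCsec.
Variables (F : fieldType) (T : lmodType F).

Definition FC (G : T -> Prop) (y : T) :=
  exists n (z : 'I_n -> T), (forall k, G (z k)) /\ y = \sum_(k < n) z k.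

Lemma FC0 G : FC G 0.
Proof. by exists 0%N, (fun _ => 0); split => [[]|]; rewrite ?big_ord0. Qed.

Lemma FC1 (G : T -> Prop) y : G y -> FC G y.
Proof. by move=> Gy; exists 1%N, (fun _ => y); split => //; rewrite big_ord1. Qed.

Lemma FCD G x y : FC G x -> FC G y -> FC G (x + y).
Proof.
move=> [n1 [z1 [G1 ->]]] [n2 [z2 [G2 ->]]].
exists (n1 + n2)%N, (fun k => match split k with inl i => z1 i | inr j => z2 j end).
split.
  by move=> k; case: (split k).
rewrite big_split_ord; congr (_ + _); apply: eq_bigr => i _.
  by rewrite (unsplitK (inl _ i)).
by rewrite (unsplitK (inr _ i)).
Qed.

Lemma FC_ind (G S : T -> Prop) : S 0 -> (forall x y, S x -> S y -> S (x + y)) ->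
  (forall z, G z -> S z) -> forall y, FC G y -> S y.
Proof.
move=> S0 SD SG y [n [z [Gz ->]]].
by apply: (big_ind S) => // k _; apply: SG.
Qed.

Lemma FC_sub (G G' : T -> Prop) : (forall z, G z -> G' z) -> forall y, FC G y -> FC G' y.
Proof. move=> H; apply: FC_ind; [exact: FC0 | exact: FCD | by move=> z /H; apply: FC1]. Qed.

Lemma FCZ (G : T -> Prop) c y : (forall z, G z -> G (c *: z)) -> FC G y -> FC G (c *: y).
Proof.
move=> H; move: y; apply: FC_ind; first by rewrite scaler0; apply: FC0.
  by move=> x y Hx Hy; rewrite scalerDr; apply: FCD.
by move=> z /H; apply: FC1.
Qed.

Lemma merge n (z : 'I_n.+1 -> T) i j : i != j ->
  exists z' : 'I_n -> T, \sum_(k < n) z' k = \sum_(k < n.+1) z k /\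
    forall k, (exists m, z' k = z m) \/ z' k = z i + z j.
Proof.
move=> nij.
pose t := tperm j ord_max.
have ti : t i != ord_max.
  apply: contra nij => /eqP h; apply/eqP.
  by rewrite -(tpermK j ord_max i) -/t h tpermR.
have ltin : (t i < n)%N.
  by have := ltn_ord (t i); rewrite ltnS leq_eqVlt => /orP [/eqP h|//]; case/eqP: ti; apply: val_inj.
pose i2 := Ordinal ltin.
exists (fun k => z (t (widen_ord (leqnSn n) k)) + (if k == i2 then z j else 0)).
split.
  rewrite big_split /= (reindex_inj (@perm_inj _ t)) big_ord_recr /=.
  rewrite /t tpermR; congr (_ + _).
  rewrite (bigD1 i2) //= eqxx big1 ?addr0 // => k /negbTE -> //.
move=> k; case: eqP => [->|_]; last by left; exists (t (widen_ord (leqnSn n) k)); rewrite addr0.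
right; congr (z _ + _).
have -> : widen_ord (leqnSn n) i2 = t i by apply: val_inj.
by rewrite tpermK.
Qed.

End FCsec.

Section Basis.
Variables (F : fieldType) (V : lmodType F) (J : Type) (b : J -> V).
Hypothesis span : forall x, FC (fun z => exists j c, z = c *: b j) x.
Hypothesis indep : forall n (f : 'I_n -> J) (c : 'I_n -> F), injective f ->
  \sum_(k < n) c k *: b (f k) = 0 -> forall k, c k = 0.
Variable y : J -> V.

Definition Gp (p : V * V) := exists j c, p = (c *: b j, c *: y j).

Lemma sum_fst n (zp : 'I_n -> V * V) : (\sum_(k < n) zp k).1 = \sum_(k < n) (zp k).1.
Proof. by apply: (big_morph fst) => //. Qed.
Lemma sum_snd n (zp : 'I_n -> V * V) : (\sum_(k < n) zp k).2 = \sum_(k < n) (zp k).2.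
Proof. by apply: (big_morph snd) => //. Qed.

Lemma core n (zp : 'I_n -> V * V) : (forall k, Gp (zp k)) ->
  (\sum_(k < n) zp k).1 = 0 -> (\sum_(k < n) zp k).2 = 0.
Proof.
elim: n zp => [|n IH] zp Gz; first by rewrite big_ord0.
pose f k := proj1_sig (constructive_indefinite_description _ (Gz k)).
have Hf k : exists c, zp k = (c *: b (f k), c *: y (f k)).
  exact: (proj2_sig (constructive_indefinite_description _ (Gz k))).
pose c k := proj1_sig (constructive_indefinite_description _ (Hf k)).
have Hc k : zp k = (c k *: b (f k), c k *: y (f k)).
  exact: (proj2_sig (constructive_indefinite_description _ (Hf k))).
case: (classic (injective f)) => [finj|fninj] H1.
  have E : \sum_(k < n.+1) c k *: b (f k) = 0.
    by apply: etrans H1; rewrite sum_fst; apply: eq_bigr => k0 _; rewrite Hc.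
  have c0 := indep finj E.
  by rewrite sum_snd big1 // => k0 _; rewrite Hc /= c0 ?scale0r.
have [i [j [fij nij]]] : exists i j, f i = f j /\ i != j.
  apply: NNPP => H; apply: fninj => i j fij; apply/eqP; apply: NNPP => /negP nij.
  by apply: H; exists i, j.
have [z' [Hs Hz']] := merge zp nij.
rewrite -Hs; apply: IH; last by rewrite Hs.
move=> k; case: (Hz' k) => [[m ->]|->]; first exact: Gz.
exists (f i), (c i + c j); rewrite !Hc fij /=.
by rewrite !scalerDl.
Qed.

Definition Rel x z := FC Gp (x, z).

Lemma GpZ a p : Gp p -> Gp (a *: p).
Proof. by move=> [j [c ->]]; exists j, (a * c); rewrite -[a *: _]/(a *: (c *: b j), a *: (c *: y j)) !scalerA. Qed.

Lemma Rel_uniq x z z' : Rel x z -> Rel x z' -> z = z'.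
Proof.
move=> H H'.
have := FCD H (FCZ (c:=-1) (@GpZ (-1)) H').
move=> [n [zp [Gz Hs]]].
have := core Gz; rewrite -Hs /= scaleN1r subrr => /(_ erefl).
by move/eqP; rewrite scaleN1r subr_eq0 => /eqP.
Qed.

Lemma Rel_ex x : exists z, Rel x z.
Proof.
move: x (span x); apply: FC_ind.
- by exists 0; apply: FC0.
- move=> x1 x2 [z1 H1] [z2 H2]; exists (z1 + z2); exact: FCD H1 H2.
- move=> _ [j [c ->]]; exists (c *: y j); apply: FC1; by exists j, c.
Qed.

Lemma lin_from_basis : exists phi : {linear V -> V}, forall j, phi (b j) = y j.
Proof.
pose g x := proj1_sig (constructive_indefinite_description _ (Rel_ex x)).
have Hg x : Rel x (g x) := proj2_sig (constructive_indefinite_description _ (Rel_ex x)).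
have lin : forall (c : F) x1 x2, g (c *: x1 + x2) = c *: g x1 + g x2.
  move=> c x1 x2; apply: (Rel_uniq (Hg _)).
  exact: (FCD (FCZ (c:=c) (@GpZ c) (Hg x1)) (Hg x2)).
pose phi : {linear V -> V} := HB.pack g (GRing.isLinear.Build _ _ _ _ g lin).
exists phi => j; apply: (Rel_uniq (Hg _)).
by apply: FC1; exists j, 1; rewrite !scale1r.
Qed.

End Basis.

Section Main.
Variables (F : fieldType) (V : lmodType F) (u : {linear V -> V}) (a : F)
  (D : Type) (lt : D -> D -> Prop) (M : D -> V -> Prop).
Hypothesis ltirr : forall x, ~ lt x x.
Hypothesis lttr : forall x y z, lt x y -> lt y z -> lt x z.
Hypothesis lttri : forall x y, lt x y \/ x = y \/ lt y x.
Hypothesis ltwf : well_founded lt.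
Hypothesis Hsub : forall al, submodule u (M al).
Hypothesis Hinc : forall al be x, lt al be -> M al x -> M be x.
Hypothesis Hnz : forall al, exists2 y, M al y & ~ prev_sum lt M al y.
Hypothesis Hgen : forall al, exists2 x, M al x &
      forall y, M al y -> exists p : {poly F}, prev_sum lt M al (y - poly_act u p x).
Hypothesis Hall : forall x : V, sum_sub M (fun _ => True) x.
Hypothesis HPA : PA lt M.
Hypothesis HPM : PM lt.

Lemma M0 al : M al 0. Proof. by have [] := Hsub al. Qed.
Lemma MD al x y : M al x -> M al y -> M al (x + y). Proof. by have [_ H _ _] := Hsub al; apply: H. Qed.
Lemma MZ al c x : M al x -> M al (c *: x). Proof. by have [_ _ H _] := Hsub al; apply: H. Qed.
Lemma Mu al x : M al x -> M al (u x). Proof. by have [_ _ _ H] := Hsub al; apply: H. Qed.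
Lemma Miter al i x : M al x -> M al (iter i u x).
Proof. by move=> Hx; elim: i => //= i IH; apply: Mu. Qed.
Lemma MB al x y : M al x -> M al y -> M al (x - y).
Proof. by move=> H1 H2; apply: MD => //; rewrite -scaleN1r; apply: MZ. Qed.
Lemma Msum al n (z : 'I_n -> V) : (forall k, M al (z k)) -> M al (\sum_(k < n) z k).
Proof. by move=> H; apply: (big_ind (M al)) => //; [apply: M0 | apply: MD]. Qed.

Lemma iterD i x y : iter i u (x + y) = iter i u x + iter i u y.
Proof. by elim: i => //= i ->; rewrite linearD. Qed.
Lemma iterZ i (c : F) x : iter i u (c *: x) = c *: iter i u x.
Proof. by elim: i => //= i ->; rewrite linearZ. Qed.

Lemma gen_ex al : exists x, M al x /\ forall y, M al y ->
   exists p : {poly F}, prev_sum lt M al (y - poly_act u p x).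
Proof. by case: (Hgen al) => x H1 H2; exists x. Qed.
Definition xg al := proj1_sig (constructive_indefinite_description _ (gen_ex al)).
Lemma xgP al : M al (xg al) /\ forall y, M al y ->
   exists p : {poly F}, prev_sum lt M al (y - poly_act u p (xg al)).
Proof. exact: (proj2_sig (constructive_indefinite_description _ (gen_ex al))). Qed.

Definition prv al := FC (fun z => exists be, lt be al /\ M be z).

Lemma prevE al y : prev_sum lt M al y <-> prv al y.
Proof.
split.
  move=> [n [f [z [H1 [H2 ->]]]]]; exists n, z; split => // k; by exists (f k).
move=> [n [z [H ->]]].
pose f k := proj1_sig (constructive_indefinite_description _ (H k)).
have Hf k : lt (f k) al /\ M (f k) (z k) := proj2_sig (constructive_indefinite_description _ (H k)).
by exists n, f, z; split; [move=> k; case: (Hf k) | split => // k; case: (Hf k)].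
Qed.

Lemma prv0 al : prv al 0. Proof. exact: FC0. Qed.
Lemma prvD al x y : prv al x -> prv al y -> prv al (x + y). Proof. exact: FCD. Qed.
Lemma prvZ al c x : prv al x -> prv al (c *: x).
Proof. apply: FCZ => z [be [H1 H2]]; exists be; split => //; exact: MZ. Qed.
Lemma prvN al x : prv al x -> prv al (- x).
Proof. by move=> H; rewrite -scaleN1r; apply: prvZ. Qed.
Lemma prvB al x y : prv al x -> prv al y -> prv al (x - y).
Proof. by move=> H1 H2; apply: prvD => //; apply: prvN. Qed.
Lemma prvM al be x : lt be al -> M be x -> prv al x.
Proof. by move=> H1 H2; apply: FC1; exists be. Qed.
Lemma prv_u al x : prv al x -> prv al (u x).
Proof.
move: x; apply: FC_ind; first by rewrite linear0; apply: prv0.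
  by move=> x y Hx Hy; rewrite linearD; apply: prvD.
by move=> z [be [H1 H2]]; apply: (prvM H1); apply: Mu.
Qed.
Lemma prv_iter al i x : prv al x -> prv al (iter i u x).
Proof. by move=> H; elim: i => //= i IH; apply: prv_u. Qed.
Lemma prv_sum al n (z : 'I_n -> V) : (forall k, prv al (z k)) -> prv al (\sum_(k < n) z k).
Proof. by move=> H; apply: (big_ind (prv al)) => //; [apply: prv0 | apply: prvD]. Qed.
Lemma prvM_sub al x : prv al x -> M al x.
Proof.
move: x; apply: FC_ind; [exact: M0 | move=> x y; exact: MD |].
by move=> z [be [H1 H2]]; apply: Hinc H2.
Qed.
Lemma prv_mono al be x : lt al be -> prv al x -> prv be x.
Proof. by move=> H; apply: FC_sub => z [g [H1 H2]]; exists g; split => //; apply: lttr H. Qed.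

Definition Below al d y := exists m (c : nat -> F), prv al m /\
   y = m + \sum_(i < d) c i *: iter i u (xg al).

Lemma Below_prv al d y : prv al y -> Below al d y.
Proof.
move=> H; exists y, (fun _ => 0); split => //.
by rewrite big1 ?addr0 // => i _; rewrite scale0r.
Qed.
Lemma Below0 al d : Below al d 0. Proof. apply: Below_prv; exact: prv0. Qed.
Lemma BelowD al d x y : Below al d x -> Below al d y -> Below al d (x + y).
Proof.
move=> [m1 [c1 [H1 ->]]] [m2 [c2 [H2 ->]]].
exists (m1 + m2), (fun i => c1 i + c2 i); split; first exact: prvD.
rewrite -!addrA; congr (_ + _); rewrite addrCA; congr (_ + _).
by rewrite -big_split /=; apply: eq_bigr => i _; rewrite scalerDl.
Qed.
Lemma BelowZ al d c x : Below al d x -> Below al d (c *: x).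
Proof.
move=> [m1 [c1 [H1 ->]]]; exists (c *: m1), (fun i => c * c1 i); split; first exact: prvZ.
by rewrite scalerDr scaler_sumr; congr (_ + _); apply: eq_bigr => i _; rewrite scalerA.
Qed.
Lemma BelowN al d x : Below al d x -> Below al d (- x).
Proof. by move=> H; rewrite -scaleN1r; apply: BelowZ. Qed.
Lemma BelowB al d x y : Below al d x -> Below al d y -> Below al d (x - y).
Proof. by move=> H1 H2; apply: BelowD => //; apply: BelowN. Qed.
Lemma Below_sum al d n (z : 'I_n -> V) : (forall k, Below al d (z k)) -> Below al d (\sum_(k < n) z k).
Proof. by move=> H; apply: (big_ind (Below al d)) => //; [apply: Below0 | apply: BelowD]. Qed.
Lemma Below_iter al d i : (i < d)%N -> Below al d (iter i u (xg al)).
Proof.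
move=> lid; exists 0, (fun k => (k == i)%:R); split; first exact: prv0.
rewrite add0r (bigD1 (Ordinal lid)) //= eqxx scale1r big1 ?addr0 // => k.
by rewrite -val_eqE /= => /negbTE ->; rewrite scale0r.
Qed.
Lemma Below_mono al d e y : (d <= e)%N -> Below al d y -> Below al e y.
Proof.
move=> de [m [c [H ->]]]; apply: BelowD; first exact: Below_prv.
by apply: Below_sum => k; apply: BelowZ; apply: Below_iter; apply: leq_trans de.
Qed.
Lemma Below_M al d y : Below al d y -> M al y.
Proof.
move=> [m [c [H ->]]]; apply: MD; first exact: prvM_sub.
by apply: Msum => k; apply: MZ; apply: Miter; case: (xgP al).
Qed.
Lemma BelowS al d y : Below al d.+1 y -> exists c y', Below al d y' /\ y = y' + c *: iter d u (xg al).
Proof.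
move=> [m [c [H ->]]]; exists (c d), (m + \sum_(i < d) c i *: iter i u (xg al)).
split; first by exists m, c.
by rewrite big_ord_recr /= addrA.
Qed.
Lemma Below_of_M al y : M al y -> exists d, Below al d y.
Proof.
move=> My; case: (xgP al) => _ /(_ y My) [p /prevE Hp].
exists (size p), (y - poly_act u p (xg al)), (fun i => p`_i); split => //.
by rewrite /poly_act subrK.
Qed.
Lemma poly_act_prv al p x : prv al x -> prv al (poly_act u p x).
Proof. by move=> H; apply: prv_sum => k; apply: prvZ; apply: prv_iter. Qed.

Lemma xg_notprv al : ~ prv al (xg al).
Proof.
move=> H; case: (Hnz al) => y My; apply; apply/prevE.
case: (xgP al) => _ /(_ y My) [p /prevE Hp].
by rewrite -(subrK (poly_act u p (xg al)) y); apply: prvD => //; apply: poly_act_prv.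
Qed.

Definition valid al d := ~ Below al d (iter d u (xg al)).

Lemma valid0 al : valid al 0.
Proof.
move=> [m [c [H E]]]; apply: (@xg_notprv al).
by move: E; rewrite big_ord0 addr0 /= => ->.
Qed.

Lemma Below_u al j y : ~ valid al j -> Below al j y -> Below al j (u y).
Proof.
move=> /NNPP Hj [m [c [H ->]]]; rewrite linearD linear_sum /=.
apply: BelowD; first by apply: Below_prv; apply: prv_u.
apply: Below_sum => k; rewrite linearZ /=; apply: BelowZ.
case: (ltnP k.+1 j) => [lkj|ge]; first by change (Below al j (iter k.+1 u (xg al))); apply: Below_iter.
have E : k.+1 = j by apply/eqP; rewrite eqn_leq ge ltn_ord.
move: Hj; change (u (iter k u (xg al))) with (iter (nat_of_ord k).+1 u (xg al)).
by move: (nat_of_ord k) E => kk ->.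
Qed.

Lemma notvalid_all al j i : ~ valid al j -> Below al j (iter i u (xg al)).
Proof.
move=> Hj; elim: i => [|i IH].
  case: j Hj => [|j] Hj; first exact: NNPP Hj.
  exact: Below_iter.
exact: Below_u.
Qed.

Lemma valid_le al d k : (k <= d)%N -> valid al d -> valid al k.
Proof.
move=> kd Hd Hk; apply: Hd; apply: Below_mono kd _; exact: notvalid_all.
Qed.

Lemma succ_ex al : exists s, is_succ lt al s.
Proof.
case: (HPM al) => c Hc.
elim/(well_founded_ind ltwf): c Hc => c IH Hc.
case: (classic (exists c', lt c' c /\ lt al c')) => [[c' [H1 H2]]|Hn].
  exact: IH H1 H2.
exists c; split => // c'' H''.
case: (lttri c'' c) => [H|[->|H]]; [|by left|by right].
by case: Hn; exists c''.
Qed.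
Definition sc al := proj1_sig (constructive_indefinite_description _ (succ_ex al)).
Lemma scP al : is_succ lt al (sc al).
Proof. exact: (proj2_sig (constructive_indefinite_description _ (succ_ex al))). Qed.
Lemma sc_lt al : lt al (sc al). Proof. by case: (scP al). Qed.
Lemma sc_le al be : lt al be -> sc al = be \/ lt (sc al) be.
Proof. by case: (scP al) => _ H /H. Qed.
Lemma sc_inj al be : sc al = sc be -> al = be.
Proof.
move=> E.
have H : forall x y, sc x = sc y -> lt x y -> False.
  move=> x y Exy lxy; case: (sc_le lxy) => [Ex|Hx].
    by have := sc_lt y; rewrite -Exy Ex; apply: ltirr.
  by have := sc_lt y; rewrite -Exy => h; apply: ltirr (lttr Hx h).
case: (lttri al be) => [h|[//|h]]; [exfalso; exact: H E h | exfalso; exact: H (esym E) h].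
Qed.
Lemma M_prv_sc al x : M al x -> prv (sc al) x.
Proof. by apply: prvM; apply: sc_lt. Qed.

Lemma valid_sc1 al : valid (sc al) 1.
Proof.
set s := sc al => Hn.
have HB : forall y, M s y -> Below s 1 y.
  move=> y /Below_of_M [d [m [c [H ->]]]].
  apply: BelowD; first exact: Below_prv.
  by apply: Below_sum => k; apply: BelowZ; apply: notvalid_all.
have [y1 [y2 [M1 [M2 Hy]]]] := HPA (scP al).
have [m1 [c1 [P1 E1]]] := HB _ M1.
have [m2 [c2 [P2 E2]]] := HB _ M2.
move: E1 E2; rewrite !big_ord1 /= => E1 E2.
have [h1 h2] : c2 0%N = 0 /\ - c1 0%N = 0.
  apply: Hy; apply/prevE.
  have -> : c2 0%N *: y1 + - c1 0%N *: y2 = c2 0%N *: m1 - c1 0%N *: m2.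
    rewrite E1 E2 /= !scalerDr !scalerA !scaleNr !mulNr scaleNr (mulrC (c1 0%N)).
    by rewrite addrACA subrr addr0.
  by apply: prvB; apply: prvZ.
have c10 : c1 0%N = 0 by apply/eqP; rewrite -oppr_eq0 h2.
have [h _] : (1 : F) = 0 /\ (0 : F) = 0.
  by apply: Hy; rewrite scale0r addr0 scale1r; apply/prevE; rewrite E1 c10 scale0r addr0.
by move/eqP: h; rewrite oner_eq0.
Qed.


Definition ltL (l l' : D * nat) := lt l.1 l'.1 \/ (l.1 = l'.1 /\ (l.2 < l'.2)%N).
Definition lev y (l : D * nat) := Below l.1 l.2.+1 y /\ ~ Below l.1 l.2 y.

Lemma ltL_trans l1 l2 l3 : ltL l1 l2 -> ltL l2 l3 -> ltL l1 l3.
Proof.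
case: l1 l2 l3 => [a1 d1] [a2 d2] [a3 d3]; rewrite /ltL /=.
move=> [h1|[e1 h1]] [h2|[e2 h2]]; subst.
- by left; apply: lttr h1 h2.
- by left.
- by left.
- by right; split => //; apply: ltn_trans h1 h2.
Qed.
Lemma ltL_irr l : ~ ltL l l.
Proof. by case=> [/ltirr|[_]]; rewrite ?ltnn. Qed.
Lemma ltL_total l l' : l <> l' -> ltL l l' \/ ltL l' l.
Proof.
case: l l' => [a1 d1] [a2 d2] ne; rewrite /ltL /=.
case: (lttri a1 a2) => [h|[e|h]]; [by left; left | subst | by right; left].
case: (ltngtP d1 d2) => [h|h|e]; [by left; right | by right; right | by subst].
Qed.

Lemma Below_ltL l l' y : ltL l l' -> Below l.1 l.2.+1 y -> Below l'.1 l'.2 y.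
Proof.
case: l l' => [a1 d1] [a2 d2] [/= h|/= [e h]] H.
  by apply: Below_prv; apply: prvM h _; apply: Below_M H.
by subst; apply: Below_mono h H.
Qed.

Lemma maxL (I : eqType) (l : I -> D * nat) (P : I -> Prop) (s : seq I) :
  injective l -> (exists t, t \in s /\ P t) ->
  exists t0, [/\ t0 \in s, P t0 & forall t, t \in s -> P t -> t = t0 \/ ltL (l t) (l t0)].
Proof.
move=> linj; elim: s => [|x s IH] Hex; first by case: Hex => t [].
case: (classic (exists t, t \in s /\ P t)) => [Hs|Hs].
  have [t0 [t0s Pt0 Ht0]] := IH Hs.
  case: (classic (P x)) => Px; last first.
    exists t0; split => //; first by rewrite in_cons t0s orbT.
    move=> t; rewrite in_cons => /orP [/eqP -> /Px []|ts]; exact: Ht0.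
  case: (classic (x = t0)) => [xt|nx].
    exists t0; split => //; first by rewrite in_cons t0s orbT.
    move=> t; rewrite in_cons => /orP [/eqP -> _|ts]; [by left | exact: Ht0].
  have nl : l x <> l t0 by move/linj.
  case: (ltL_total nl) => h.
    exists t0; split => //; first by rewrite in_cons t0s orbT.
    move=> t; rewrite in_cons => /orP [/eqP -> _|ts]; [by right | exact: Ht0].
  exists x; split => //; first by rewrite in_cons eqxx.
  move=> t; rewrite in_cons => /orP [/eqP -> _|ts Pt]; first by left.
  case: (Ht0 t ts Pt) => [->|h']; first by right.
  by right; apply: ltL_trans h' h.
case: (classic (P x)) => Px.
  exists x; split => //; first by rewrite in_cons eqxx.
  move=> t; rewrite in_cons => /orP [/eqP -> _|ts Pt]; first by left.
  by case: Hs; exists t.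
case: Hex => t; rewrite in_cons => [[/orP [/eqP -> /Px []|ts Pt]]].
by case: Hs; exists t.
Qed.

Lemma lev_indep (I : finType) (z : I -> V) (l : I -> D * nat) (c : I -> F) :
  injective l -> (forall t, lev (z t) (l t)) ->
  \sum_t c t *: z t = 0 -> forall t, c t = 0.
Proof.
move=> linj Hl Hs t; apply: NNPP => ct.
have [t0 [_ ct0 Ht0]] := @maxL I l (fun t => c t <> 0) (enum I) linj
  (ex_intro _ t (conj (mem_enum I t) ct)).
have Hr : Below (l t0).1 (l t0).2 (\sum_(t | t != t0) c t *: z t).
  apply: (big_ind (Below (l t0).1 (l t0).2)); [exact: Below0 | exact: BelowD |].
  move=> t1 nt1; case: (classic (c t1 = 0)) => [->|c1]; first by rewrite scale0r; apply: Below0.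
  case: (Ht0 t1 (mem_enum I t1) c1) => [e|h]; first by rewrite e eqxx in nt1.
  by apply: BelowZ; apply: (Below_ltL h); case: (Hl t1).
move: Hs; rewrite (bigD1 t0) //= => /eqP; rewrite addr_eq0 => /eqP Hc.
case: (Hl t0) => _; apply.
have -> : z t0 = (c t0)^-1 *: (c t0 *: z t0) by rewrite scalerA mulVf ?scale1r //; apply/eqP.
by apply: BelowZ; rewrite Hc; apply: BelowN.
Qed.

Definition J := {p : D * nat | valid p.1 p.2}.
Definition bb (j : J) := iter (proj1_sig j).2 u (xg (proj1_sig j).1).

Lemma sig_inj (A : Type) (P : A -> Prop) (x y : {p : A | P p}) :
  proj1_sig x = proj1_sig y -> x = y.
Proof. case: x y => [x px] [y py] /= e; subst; f_equal; apply: proof_irrelevance. Qed.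

Lemma lev_bb j : lev (bb j) (proj1_sig j).
Proof.
case: j => [[al k] vk]; rewrite /bb /lev /=; split => //.
exact: Below_iter.
Qed.

Lemma bb_indep n (f : 'I_n -> J) (c : 'I_n -> F) : injective f ->
  \sum_(k < n) c k *: bb (f k) = 0 -> forall k, c k = 0.
Proof.
move=> finj; apply: (@lev_indep _ (fun k => bb (f k)) (fun k => proj1_sig (f k))).
  by move=> i j /sig_inj /finj.
by move=> k; apply: lev_bb.
Qed.

Definition le al be := lt al be \/ al = be.
Definition Span (P : J -> Prop) := FC (fun z => exists j c, P j /\ z = c *: bb j).

Lemma SpanZ P c y : Span P y -> Span P (c *: y).
Proof. apply: FCZ => z [j [c' [Pj ->]]]; exists j, (c * c'); split => //; by rewrite scalerA. Qed.

Lemma M_span be y : M be y -> Span (fun j => le (proj1_sig j).1 be) y.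
Proof.
elim/(well_founded_ind ltwf): be y => be IH.
have Hprv : forall y, prv be y -> Span (fun j => le (proj1_sig j).1 be) y.
  apply: FC_ind; [exact: FC0 | move=> x y; exact: FCD |].
  move=> z [g [lg Mg]]; apply: FC_sub (IH g lg z Mg).
  move=> _ [j [c [Pj ->]]]; exists j, c; split => //; left.
  by case: Pj => [h|->]; [apply: lttr h lg | exact: lg].
have Hit : forall i, Span (fun j => le (proj1_sig j).1 be) (iter i u (xg be)).
  elim/ltn_ind => i IHi.
  case: (classic (valid be i)) => vi.
    apply: FC1; exists (exist _ (be, i) vi), 1; split; first by right.
    by rewrite scale1r.
  have [m [c [Hm ->]]] : Below be i (iter i u (xg be)) by apply: NNPP.
  apply: FCD; first exact: Hprv.
  apply: (big_ind (Span _)); [exact: FC0 | move=> x y; exact: FCD |].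
  by move=> k _; apply: SpanZ; apply: IHi.
move=> y /Below_of_M [d [m [c [Hm ->]]]].
apply: FCD; first exact: Hprv.
apply: (big_ind (Span _)); [exact: FC0 | move=> x y'; exact: FCD |].
by move=> k _; apply: SpanZ; apply: Hit.
Qed.

Lemma V_span x : FC (fun z => exists j c, z = c *: bb j) x.
Proof.
have [n [f [z [_ [Hz ->]]]]] := Hall x.
apply: (big_ind (FC _)); [exact: FC0 | move=> x1 y1; exact: FCD |].
move=> k _; apply: FC_sub (M_span (Hz k)).
by move=> _ [j [c [_ ->]]]; exists j, c.
Qed.


Definition yv (j : J) : V :=
  if excluded_middle_informative (~ valid (proj1_sig j).1 (proj1_sig j).2.+1)
  then a *: bb j - xg (sc (proj1_sig j).1) else 0.

Definition next (l : D * nat) : D * nat :=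
  if excluded_middle_informative (valid l.1 l.2.+1) then (l.1, l.2.+1) else (sc l.1, 0%N).

Definition gen lam := forall be d, valid be d -> ~ valid be d.+1 -> sc be <> lam.

Lemma next_valid l : valid l.1 l.2 -> valid (next l).1 (next l).2.
Proof. by rewrite /next; case: excluded_middle_informative => //= _ _; apply: valid0. Qed.

Lemma next_inj l l' : valid l.1 l.2 -> valid l'.1 l'.2 -> next l = next l' -> l = l'.
Proof.
case: l l' => [al d] [be e] /= va vb; rewrite /next /=.
case: excluded_middle_informative => h1; case: excluded_middle_informative => h2 //.
- by case=> -> ->.
- by case=> /sc_inj E; subst be; case: (ltngtP d e) => [h|h|->] //;
   [case: h1; apply: valid_le vb | case: h2; apply: valid_le va].
Qed.

Lemma next_gen lam l : gen lam -> valid l.1 l.2 -> next l <> (lam, 0%N).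
Proof.
case: l => [al d] g /= va; rewrite /next /=.
case: excluded_middle_informative => h /= E; first by case: E.
by case: E => E'; apply: (g al d va h E').
Qed.

Lemma chain_valid lam i : valid (iter i next (lam, 0%N)).1 (iter i next (lam, 0%N)).2.
Proof. by elim: i => [|i IH] /=; [apply: valid0 | apply: next_valid]. Qed.

Lemma chain_inj lam lam' i i' : gen lam -> gen lam' ->
  iter i next (lam, 0%N) = iter i' next (lam', 0%N) -> i = i' /\ lam = lam'.
Proof.
move=> g g'; elim: i i' => [|i IH] [|i'] //=.
- by case.
- by move=> E; case: (next_gen g (@chain_valid lam' i')).
- by move=> E; case: (next_gen g' (@chain_valid lam i)).
- move=> /next_inj E; have [-> ->] := IH i' (E (@chain_valid _ _) (@chain_valid _ _)).
  by [].
Qed.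

Lemma poly_actE (g : V -> V) (p : {poly F}) x N : (size p <= N)%N ->
  poly_act g p x = \sum_(i < N) p`_i *: iter i g x.
Proof.
move=> sN; rewrite /poly_act (big_ord_widen N (fun i => p`_i *: iter i g x) sN).
rewrite big_mkcond; apply: eq_bigr => i _; case: ifP => // /negbT.
by rewrite -leqNgt => h; rewrite nth_default ?scale0r.
Qed.

Lemma lev_add l y z c : Below l.1 l.2 z -> lev y l -> c != 0 -> lev (z + c *: y) l.
Proof.
move=> Bz [H1 H2] c0; split.
  by apply: BelowD; [apply: Below_mono Bz | apply: BelowZ].
move=> H; apply: H2.
have -> : y = c^-1 *: ((z + c *: y) - z) by rewrite addrC addKr scalerA mulVf ?scale1r.
by apply: BelowZ; apply: BelowB.
Qed.

Section WithV.
Variable v : {linear V -> V}.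
Hypothesis Hv : forall j, v (bb j) = yv j.

Lemma v_notlast al k : valid al k -> valid al k.+1 -> v (iter k u (xg al)) = 0.
Proof.
move=> vk vk1; have := Hv (exist _ (al, k) vk); rewrite /yv /bb /=.
by case: excluded_middle_informative.
Qed.
Lemma v_last al k : valid al k -> ~ valid al k.+1 ->
  v (iter k u (xg al)) = a *: iter k u (xg al) - xg (sc al).
Proof.
move=> vk vk1; have := Hv (exist _ (al, k) vk); rewrite /yv /bb /=.
by case: excluded_middle_informative.
Qed.

Lemma vv x : v (v x) = a *: v x.
Proof.
move: x (V_span x); apply: FC_ind.
- by rewrite !linear0.
- by move=> x y Hx Hy; rewrite !linearD Hx Hy ?scalerDr.
move=> _ [[[al k] vk] [c ->]]; rewrite !linearZ /= /bb /=; congr (c *: _).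
case: (classic (valid al k.+1)) => h.
  by rewrite v_notlast // linear0 scaler0.
rewrite v_last // linearB linearZ /= v_last //.
by rewrite -[xg (sc al)]/(iter 0 u (xg (sc al))) v_notlast ?subr0 //;
  [apply: valid0 | apply: valid_sc1].
Qed.

Definition w := fun x => u x - v x.
Lemma wD x y : w (x + y) = w x + w y.
Proof. by rewrite /w [u _]linearD [v _]linearD opprD addrACA. Qed.
Lemma wZ c x : w (c *: x) = c *: w x.
Proof. by rewrite /w [u _]linearZ [v _]linearZ scalerBr. Qed.
Lemma w0 : w 0 = 0.
Proof. by rewrite /w [u _]linear0 [v _]linear0 subrr. Qed.
Lemma wsum n (z : 'I_n -> V) : w (\sum_(k < n) z k) = \sum_(k < n) w (z k).
Proof. by apply: (big_morph w wD w0). Qed.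
Lemma wB x y : w (x - y) = w x - w y.
Proof. by rewrite wD -scaleN1r wZ scaleN1r. Qed.

Lemma w_notlast al k : valid al k -> valid al k.+1 -> w (iter k u (xg al)) = iter k.+1 u (xg al).
Proof. by move=> h1 h2; rewrite /w v_notlast // subr0. Qed.
Lemma w_last al k : valid al k -> ~ valid al k.+1 ->
  w (iter k u (xg al)) = iter k.+1 u (xg al) - a *: iter k u (xg al) + xg (sc al).
Proof. by move=> h1 h2; rewrite /w v_last // opprB addrA addrAC. Qed.

Lemma v_M be al y : lt be al -> M be y -> Below al 1 (v y).
Proof.
move=> lba My; apply: (@FC_ind _ _ _ (fun y => Below al 1 (v y))) (M_span My).
- by rewrite linear0; apply: Below0.
- by move=> x1 y1 H1 H2; rewrite linearD; apply: BelowD.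
move=> _ [j [c [Pj ->]]]; rewrite linearZ; apply: BelowZ; rewrite Hv /yv.
have lga : lt (proj1_sig j).1 al by case: Pj => [h|->]; [apply: lttr h lba | exact: lba].
case: excluded_middle_informative => hl; last exact: Below0.
apply: BelowB.
  apply: BelowZ; apply: Below_prv; apply: prvM lga _.
  by apply: Miter; case: (xgP (proj1_sig j).1).
case: (sc_le lga) => [->|h]; first exact: (@Below_iter al 1 0).
by apply: Below_prv; apply: (prvM h); case: (xgP (sc (proj1_sig j).1)).
Qed.

Lemma w_prv al y : prv al y -> Below al 1 (w y).
Proof.
move: y; apply: FC_ind.
- by rewrite w0; apply: Below0.
- by move=> x1 y1 H1 H2; rewrite wD; apply: BelowD.
move=> z [be [lba Mz]]; rewrite /w; apply: BelowB; last exact: v_M Mz.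
by apply: Below_prv; apply: prvM lba _; apply: Mu.
Qed.

Lemma Below_next al d y : Below al d.+1 y -> Below (next (al, d)).1 (next (al, d)).2 y.
Proof.
rewrite /next /=; case: excluded_middle_informative => //= _ H.
by apply: Below_prv; apply: M_prv_sc; apply: Below_M H.
Qed.

Lemma w_Below al d y : valid al d -> Below al d y -> Below (next (al, d)).1 (next (al, d)).2 (w y).
Proof.
move=> vd [m [c [Hm ->]]]; rewrite wD wsum; apply: BelowD.
  by apply: Below_next; apply: Below_mono (w_prv Hm).
apply: Below_sum => k; rewrite wZ; apply: BelowZ; apply: Below_next.
rewrite w_notlast; first by apply: Below_iter; rewrite ltnS.
  by apply: valid_le vd; apply: ltnW.
exact: valid_le vd.
Qed.

Lemma w_iter_lev al d : valid al d -> lev (w (iter d u (xg al))) (next (al, d)).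
Proof.
move=> vd; rewrite /next /=; case: excluded_middle_informative => /= h.
  rewrite w_notlast //; split => //; exact: Below_iter.
rewrite w_last //; split.
  apply: BelowD; last exact: (@Below_iter _ 1 0).
  by apply: Below_prv; apply: M_prv_sc; apply: MB; [|apply: MZ]; apply: Miter; case: (xgP al).
move=> H; have V0 := @valid0 (sc al); rewrite /valid /= in V0 H; apply: V0.
have -> : xg (sc al) = (iter d.+1 u (xg al) - a *: iter d u (xg al) + xg (sc al))
   - (iter d.+1 u (xg al) - a *: iter d u (xg al)) by rewrite addrC addKr.
apply: BelowB => //; apply: Below_prv; apply: M_prv_sc; apply: MB; [|apply: MZ]; apply: Miter; by case: (xgP al).
Qed.

Lemma shift y l : lev y l -> lev (w y) (next l).
Proof.
case: l => [al d] [H1 H2] /=.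
have [c [y' [By' Ey]]] := BelowS H1.
have c0 : c != 0.
  apply/eqP => c0; apply: H2; by rewrite Ey c0 scale0r addr0.
have vd : valid al d.
  move=> H; apply: H2; rewrite Ey; apply: BelowD => //; exact: BelowZ.
rewrite Ey wD wZ; apply: lev_add => //; last exact: w_iter_lev.
exact: w_Below.
Qed.

Lemma chain_lev lam i : lev (iter i w (xg lam)) (iter i next (lam, 0%N)).
Proof.
elim: i => [|i IH] /=; last exact: shift.
split; [exact: (@Below_iter lam 1 0) | exact: (@valid0 lam)].
Qed.

Definition Ig := {lam : D | gen lam}.

Lemma w_indep n (f : 'I_n -> Ig) (p : 'I_n -> {poly F}) : injective f ->
  \sum_(k < n) poly_act w (p k) (xg (proj1_sig (f k))) = 0 -> forall k, p k = 0.
Proof.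
move=> finj.
set N := \max_(k < n) size (p k).
have E k : poly_act w (p k) (xg (proj1_sig (f k))) =
    \sum_(i < N) (p k)`_i *: iter i w (xg (proj1_sig (f k))).
  apply: poly_actE; rewrite /N; first [exact: (leq_bigmax_cond (fun k0 : 'I_n => size (p k0)) (erefl true)) | exact: leq_bigmax | exact: (@leq_bigmax _ (fun k0 : 'I_n => size (p k0)) k) ].
under eq_bigr => k _ do rewrite E.
rewrite pair_big /= => H0.
have H := @lev_indep _ (fun t : 'I_n * 'I_N => iter t.2 w (xg (proj1_sig (f t.1))))
  (fun t => iter t.2 next (proj1_sig (f t.1), 0%N)) (fun t => (p t.1)`_t.2).
have Hc := H _ (fun t => chain_lev _ _) H0.
move=> k; apply/polyP => j; rewrite coef0.
case: (ltnP j N) => [h|h].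
  apply: (Hc _ (k, Ordinal h)).
  move=> [k1 i1] [k2 i2] /= /chain_inj.
  case: (f k1) (f k2) (@finj k1 k2) => [l1 g1] [l2 g2] /= fi.
  move=> /(_ g1 g2) [ei el]; subst.
  have -> : k1 = k2 by apply: fi; apply: sig_inj.
  by congr pair; apply: val_inj.
apply: nth_default; apply: leq_trans h.
rewrite /N; first [exact: (leq_bigmax_cond (fun k0 : 'I_n => size (p k0)) (erefl true)) | exact: leq_bigmax | exact: (@leq_bigmax _ (fun k0 : 'I_n => size (p k0)) k) ].
Qed.

Definition Wsp := FC (fun z => exists (i : Ig) k c, z = c *: iter k w (xg (proj1_sig i))).

Lemma W_w y : Wsp y -> Wsp (w y).
Proof.
move: y; apply: FC_ind; first by rewrite w0; apply: FC0.
  by move=> x y Hx Hy; rewrite wD; apply: FCD.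
move=> _ [i [k [c ->]]]; rewrite wZ; apply: FC1; exists i, k.+1, c; by [].
Qed.
Lemma WZ c y : Wsp y -> Wsp (c *: y).
Proof. apply: FCZ => _ [i [k [c' ->]]]; exists i, k, (c * c'); by rewrite scalerA. Qed.
Lemma WB x y : Wsp x -> Wsp y -> Wsp (x - y).
Proof. by move=> H1 H2; apply: FCD => //; rewrite -scaleN1r; apply: WZ. Qed.

Lemma M_W be y : M be y -> Wsp y.
Proof.
elim/(well_founded_ind ltwf): be y => be IH.
have Hprv : forall y, prv be y -> Wsp y.
  apply: FC_ind; [exact: FC0 | move=> x y; exact: FCD |].
  by move=> z [g [lg Mg]]; apply: IH lg z Mg.
have Hx : Wsp (xg be).
  case: (classic (gen be)) => g.
    apply: FC1; exists (exist _ be g), 0%N, 1; by rewrite scale1r.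
  have [ga [d [vd [nvd1 E]]]] : exists ga d, valid ga d /\ ~ valid ga d.+1 /\ sc ga = be.
    apply: NNPP => H; apply: g => ga d vd nvd1 E; apply: H; by exists ga, d.
  have lgb : lt ga be by rewrite -E; apply: sc_lt.
  have Mi : forall i, M ga (iter i u (xg ga)) by move=> i; apply: Miter; case: (xgP ga).
  have -> : xg be = w (iter d u (xg ga)) - (iter d.+1 u (xg ga) - a *: iter d u (xg ga)).
    by rewrite w_last // E addrC addKr.
  apply: WB; first by apply: W_w; apply: IH lgb _ (Mi d).
  by apply: IH lgb _ _; apply: MB; [|apply: MZ]; apply: Mi.
have HB : forall d y, Below be d y -> Wsp y.
  elim=> [|d IHd] y.
    by move=> [m [c [Hm ->]]]; rewrite big_ord0 addr0; apply: Hprv.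
  move=> /BelowS [c [y' [By' ->]]]; apply: FCD; first exact: IHd.
  apply: WZ.
  case: (classic (valid be d)) => vd; last by apply: IHd; apply: NNPP.
  case: d IHd By' vd => [|d] IHd By' vd //.
  have vd' : valid be d by apply: valid_le vd.
  rewrite -[iter d.+1 u _]/(iter d.+1 u (xg be)) -w_notlast //.
  by apply: W_w; apply: IHd; apply: Below_iter.
by move=> y /Below_of_M [d /HB].
Qed.

Lemma w_span x : exists n (f : 'I_n -> Ig) (p : 'I_n -> {poly F}),
  x = \sum_(k < n) poly_act w (p k) (xg (proj1_sig (f k))).
Proof.
have Wx : Wsp x.
  have [n [f [z [_ [Hz ->]]]]] := Hall x.
  apply: (big_ind Wsp); [exact: FC0 | move=> x1 y1; exact: FCD |].
  move=> k _; exact: M_W (Hz k).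
case: Wx => n [z [Hz ->]].
pose f k := proj1_sig (constructive_indefinite_description _ (Hz k)).
have Hf k : exists kk c, z k = c *: iter kk w (xg (proj1_sig (f k))).
  exact: (proj2_sig (constructive_indefinite_description _ (Hz k))).
pose kk k := proj1_sig (constructive_indefinite_description _ (Hf k)).
have Hkk k : exists c, z k = c *: iter (kk k) w (xg (proj1_sig (f k))).
  exact: (proj2_sig (constructive_indefinite_description _ (Hf k))).
pose c k := proj1_sig (constructive_indefinite_description _ (Hkk k)).
have Hc k : z k = c k *: iter (kk k) w (xg (proj1_sig (f k))).
  exact: (proj2_sig (constructive_indefinite_description _ (Hkk k))).
exists n, f, (fun k => c k *: 'X^(kk k)).
apply: eq_bigr => k _; rewrite Hc (@poly_actE _ _ _ (kk k).+1).
  rewrite big_ord_recr /= big1 ?add0r; first by rewrite coefZ coefXn eqxx mulr1.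
  by move=> i _; rewrite coefZ coefXn ltn_eqF ?mulr0 ?scale0r //=.
by apply: leq_trans (size_scale_leq _ _) _; rewrite size_polyXn.
Qed.

Lemma elem_w : elementary (fun x => u x - v x).
Proof.
exists Ig, (fun i => xg (proj1_sig i)); split.
  exact: w_span.
exact: w_indep.
Qed.

End WithV.

Lemma main_sec : exists v : {linear V -> V},
    (forall x, v (v x) = a *: v x) /\ elementary (fun x => u x - v x).
Proof.
have [v Hv] := lin_from_basis V_span bb_indep yv.
exists v; split; [exact: vv | exact: elem_w].
Qed.

End Main.

Theorem proposition3 (F : fieldType) (V : lmodType F) (u : {linear V -> V}) (a : F)
    (D : Type) (lt : D -> D -> Prop) (M : D -> V -> Prop) :
  stratification u lt M -> PA lt M -> PM lt ->
  exists v : {linear V -> V},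
    (forall x, v (v x) = a *: v x) /\ elementary (fun x => u x - v x).
Proof.
move=> [_ [[irr tr tri wf] [Hsub [Hinc [Hnz [Hgen Hall]]]]]] HPA HPM.
exact: (main_sec a irr tr tri wf Hsub Hinc Hnz Hgen Hall HPA HPM).
Qed.
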